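(* Let $M\ge1$ and let $F_1,\dots,F_M:\mathbb{R}^d\to\mathbb{R}$ be differentiable functions, each with $L$-Lipschitz continuous gradient ($L>0$) and each $\Upsilon$-strongly convex ($\Upsilon>0$). Let $w_1,\dots,w_M>0$ with $\sum_m w_m=1$, define the global loss $\mathcal{L}(\theta)=\sum_{m=1}^M w_m F_m(\theta)$ and let $\theta^*$ be its minimizer. Fix $\epsilon_{\mathrm{Local}}\in(0,1)$, $\epsilon_{\mathrm{UAV}}\in(0,1)$ and $\varrho$ with $0<\varrho\le \Upsilon/L$. Let $\theta[0]\in\mathbb{R}^d$ and generate a sequence as follows: given $\theta[n]$, for each $m$ define the local objective $$G_{m,n}(h)=F_m(\theta[n]+h)-\bigl(\nabla F_m(\theta[n])-\varrho\nabla\mathcal{L}(\theta[n])\bigr)^{\mathsf T}h,$$ let $h_m[n]$ be any vector satisfying $$G_{m,n}(h_m[n])-\min_h G_{m,n}(h)\le \epsilon_{\mathrm{Local}}\Bigl(G_{m,n}(0)-\min_h G_{m,n}(h)\Bigr),$$ and set $\theta[n+1]=\theta[n]+\frac{1}{M}\sum_{m=1}^M h_m[n]$. Define $$\check N=\frac{2L^2}{\Upsilon^2\varrho(1-\epsilon_{\mathrm{Local}})}\ln\!\left(\frac{1}{\epsilon_{\mathrm{UAV}}}\right).$$ Then for every integer $n\ge\check N$, $$\mathcal{L}(\theta[n])-\mathcal{L}(\theta^* )\le\epsilon_{\mathrm{UAV}}\bigl(\mathcal{L}(\theta[0])-\mathcal{L}(\theta^* )\bigr),$$ i.e. $\check N$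 global (UAV) aggregation rounds suffice to reach global accuracy $\epsilon_{\mathrm{UAV}}$.
   Context: This models federated learning with $M$ IoT devices and a UAV acting as aggregation server: $F_m$ is the local loss of device $m$ on its dataset $\mathcal{D}_m$, the weights are $w_m=|\mathcal{D}_m|/\sum_k|\mathcal{D}_k|$, $h_m[n]$ is the local model update of device $m$ computed to local accuracy $\epsilon_{\mathrm{Local}}$, and the UAV aggregates by averaging the updates. $\Upsilon$-strong convexity means $F(y)\ge F(x)+\nabla F(x)^{\mathsf T}(y-x)+\frac{\Upsilon}{2}\|y-x\|^2$ for all $x,y$. *)

(* Defs.v *)
From HB Require Import structures.
From mathcomp Require Import all_boot all_order all_algebra.
From mathcomp Require Import all_classical all_reals all_analysis.
Set Implicit Arguments. Unset Strict Implicit. Unset Printing Implicit Defensive.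
Import Order.TTheory GRing.Theory Num.Theory.
Import numFieldNormedType.Exports.
Local Open Scope ring_scope.

Definition dotv {R : realType} {d : nat} (u v : 'rV[R]_d) : R :=
  \sum_(i < d) u ord0 i * v ord0 i.

Definition enorm {R : realType} {d : nat} (u : 'rV[R]_d) : R :=
  Num.sqrt (dotv u u).

Definition is_gradient {R : realType} {d : nat}
  (F : 'rV[R]_d -> R) (g : 'rV[R]_d -> 'rV[R]_d) : Prop :=
  forall x, differentiable F x /\ forall h, 'd F x h = dotv (g x) h.

Definition lipschitz_grad {R : realType} {d : nat}
  (L : R) (g : 'rV[R]_d -> 'rV[R]_d) : Prop :=
  forall x y, enorm (g x - g y) <= L * enorm (x - y).

Definition strongly_convex {R : realType} {d : nat} (U : R)
  (F : 'rV[R]_d -> R) (g : 'rV[R]_d -> 'rV[R]_d) : Prop :=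
  forall x y, F x + dotv (g x) (y - x) + U / 2 * dotv (y - x) (y - x) <= F y.

Definition local_obj {R : realType} {d : nat}
  (F : 'rV[R]_d -> R) (gF gL : 'rV[R]_d -> 'rV[R]_d) (rho : R)
  (th : 'rV[R]_d) (h : 'rV[R]_d) : R :=
  F (th + h) - dotv (gF th - rho *: gL th) h.

Definition local_accurate {R : realType} {d : nat}
  (G : 'rV[R]_d -> R) (eps : R) (h : 'rV[R]_d) : Prop :=
  exists hstar, (forall h', G hstar <= G h') /\
    G h - G hstar <= eps * (G 0 - G hstar).

(* Main.v *)
Require Import Defs.
From HB Require Import structures.
From mathcomp Require Import all_boot all_order all_algebra.
From mathcomp Require Import all_classical all_reals all_analysis.
From mathcomp Require Import ring lra.
Import Order.TTheory GRing.Theory Num.Theory.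
Import numFieldNormedType.Exports.
Local Open Scope ring_scope.

Section Dot.
Variables (R : realType) (d : nat).
Implicit Types u v x : 'rV[R]_d.

Lemma dotvC u v : dotv u v = dotv v u.
Proof. by apply: eq_bigr => i _; rewrite mulrC. Qed.

Lemma dotvDl u v x : dotv (u + v) x = dotv u x + dotv v x.
Proof. by rewrite /dotv -big_split; apply: eq_bigr => i _; rewrite mxE mulrDl. Qed.

Lemma dotvZl (a : R) u v : dotv (a *: u) v = a * dotv u v.
Proof. by rewrite /dotv mulr_sumr; apply: eq_bigr => i _; rewrite mxE mulrA. Qed.

Lemma dotvNl u v : dotv (- u) v = - dotv u v.
Proof. by rewrite -scaleN1r dotvZl mulN1r. Qed.

Lemma dotvBl u v x : dotv (u - v) x = dotv u x - dotv v x.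
Proof. by rewrite dotvDl dotvNl. Qed.

Lemma dotvDr u v x : dotv x (u + v) = dotv x u + dotv x v.
Proof. by rewrite dotvC dotvDl !(dotvC x). Qed.

Lemma dotvZr (a : R) u v : dotv v (a *: u) = a * dotv v u.
Proof. by rewrite dotvC dotvZl dotvC. Qed.

Lemma dotvNr u v : dotv v (- u) = - dotv v u.
Proof. by rewrite dotvC dotvNl dotvC. Qed.

Lemma dotvBr u v x : dotv x (u - v) = dotv x u - dotv x v.
Proof. by rewrite dotvDr dotvNr. Qed.

Lemma dotv0r u : dotv u 0 = 0.
Proof. by rewrite /dotv big1 // => i _; rewrite mxE mulr0. Qed.

Lemma dotv0l u : dotv 0 u = 0.
Proof. by rewrite dotvC dotv0r. Qed.

Lemma dotv_ge0 u : 0 <= dotv u u.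
Proof. by rewrite /dotv sumr_ge0 // => i _; rewrite -expr2 sqr_ge0. Qed.

Lemma dotv_suml n (a : 'I_n -> 'rV[R]_d) v :
  dotv (\sum_(m < n) a m) v = \sum_(m < n) dotv (a m) v.
Proof.
elim: n a => [|n IH] a; first by rewrite !big_ord0 dotv0l.
by rewrite !big_ord_recr /= dotvDl IH.
Qed.

Lemma dotv_sumr n (a : 'I_n -> 'rV[R]_d) v :
  dotv v (\sum_(m < n) a m) = \sum_(m < n) dotv v (a m).
Proof. by rewrite dotvC dotv_suml; apply: eq_bigr => i _; rewrite dotvC. Qed.

Lemma enorm_sq u : enorm u ^+ 2 = dotv u u.
Proof. by rewrite /enorm sqr_sqrtr // dotv_ge0. Qed.

Lemma dotv_young (s : R) u v : 0 < s ->
  dotv u v <= (s * dotv u u + dotv v v / s) / 2.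
Proof.
move=> s0.
have := dotv_ge0 (s *: u - v).
rewrite dotvBl !dotvBr !dotvZl !dotvZr (dotvC v u) => H.
have H2 : 2 * s * dotv u v <= s * (s * dotv u u) + dotv v v by lra.
rewrite ler_pdivlMr // -subr_ge0.
have -> : s * dotv u u + dotv v v / s - dotv u v * 2 =
  (s * (s * dotv u u) - 2 * s * dotv u v + dotv v v) / s.
  by field; rewrite gt_eqF.
by apply: divr_ge0; lra.
Qed.

End Dot.

Lemma line_deriv (R : realType) (d : nat) (F : 'rV[R]_d -> R) g x v (t : R) :
  is_gradient F g ->
  is_derive t 1 (fun s : R => F (s *: v + x)) (dotv (g (t *: v + x)) v).
Proof.
move=> hg.
pose line := (fun s : R => s *: v + x).
have dl : is_diff t line (( *:%R ^~ v) + 0).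
  have -> : line = ( *:%R ^~ v) + cst x by apply/funext => s.
  exact: is_diffD.
have ldiff : differentiable line t by case: dl.
have dF : differentiable F (line t) by have [] := hg (line t).
have dc : differentiable (F \o line) t.
  by apply: differentiable_comp => //; exact: ldiff.
apply: DeriveDef; first exact: diff_derivable.
rewrite deriveE // diff_comp //=.
rewrite [X in X 1]diff_val /=.
have [_ ->] := hg (line t).
by rewrite /= addr0 scale1r.
Qed.

Lemma descent (R : realType) (d : nat) (F : 'rV[R]_d -> R) g (L : R) :
  is_gradient F g -> lipschitz_grad L g -> 0 < L ->
  forall x v, F (x + v) <= F x + dotv (g x) v + L / 2 * dotv v v.
Proof.
move=> hg hl hL x v.
set c1 := dotv (g x) v; set c2 := L / 2 * dotv v v.
pose phi := fun s : R => F (s *: v + x).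
pose psi := phi - c1 \*: (@idfun R) - c2 \*: ((@idfun R) * (@idfun R)).
have D : forall t : R, is_derive t (1:R) psi (dotv (g (t *: v + x)) v - c1 - c2 * (2 * t)).
  move=> t.
  have H1 := @line_deriv R d F g x v t hg.
  have H2 := is_deriveB (is_deriveB H1 (is_deriveZ c1 (is_derive_id t 1)))
     (is_deriveZ c2 (is_deriveM (is_derive_id t (1:R)) (is_derive_id t 1))).
  apply: (is_derive_eq H2).
  rewrite /=; rewrite /GRing.scale /=; ring.
have [c /andP[c0 c1'] ] : exists2 c : R, c \in `]0, 1[ &
    psi 1 - psi 0 = (dotv (g (c *: v + x)) v - c1 - c2 * (2 * c)) * (1 - 0).
  apply: (@MVT R psi (fun c => dotv (g (c *: v + x)) v - c1 - c2 * (2 * c)) 0 1); first by [].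
  apply: derivable_within_continuous => t _.
  by have [] := D t.
move=> E.
have Hpsi1 : psi 1 = F (x + v) - c1 - c2.
  rewrite /psi /phi !fctE /= scale1r (addrC v x); congr (_ - _ - _); rewrite /GRing.scale /=; ring.
have Hpsi0 : psi 0 = F x.
  rewrite /psi /phi !fctE /= scale0r add0r /GRing.scale /=; ring.
rewrite Hpsi1 Hpsi0 subr0 mulr1 in E.
set a := g (c *: v + x) - g x.
have ha : dotv (g (c *: v + x)) v - c1 = dotv a v by rewrite /a dotvBl.
have cpos : 0 < L * c by rewrite mulr_gt0.
have Hna : enorm a <= L * enorm (c *: v) by rewrite /a -{2}(addrK x (c *: v)); exact: hl.
have Haa : dotv a a <= L * c * (L * c * dotv v v).
  rewrite -!enorm_sq.
  have -> : L * c * (L * c * enorm v ^+ 2) = (L * enorm (c *: v)) ^+ 2.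
    rewrite exprMn !enorm_sq dotvZl dotvZr; ring.
  rewrite ler_sqr // ?nnegrE ?sqrtr_ge0 //.
  by rewrite mulr_ge0 ?sqrtr_ge0 // ltW.
have Y := @dotv_young R d ((L * c)^-1) a v (ltac:(by rewrite invr_gt0)).
rewrite invrK in Y.
have Y2 : (L * c)^-1 * dotv a a <= L * c * dotv v v.
  rewrite ler_pdivrMl //.
have Hd : dotv a v <= L * c * dotv v v by lra.
have : dotv (g (c *: v + x)) v - c1 - c2 * (2 * c) <= 0.
  rewrite ha /c2; lra.
lra.
Qed.

Lemma jensen_dot (R : realType) (d n : nat) (a : 'I_n -> 'rV[R]_d) : (0 < n)%N ->
  dotv (n%:R^-1 *: \sum_(m < n) a m) (n%:R^-1 *: \sum_(m < n) a m)
  <= n%:R^-1 * \sum_(m < n) dotv (a m) (a m).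
Proof.
move=> n0.
have nR : 0 < n%:R :> R by rewrite ltr0n.
set D := n%:R^-1 *: \sum_(m < n) a m.
have S : \sum_(m < n) a m = n%:R *: D by rewrite /D scalerA mulfV ?gt_eqF // scale1r.
have H : 0 <= \sum_(m < n) dotv (a m - D) (a m - D).
  by apply: sumr_ge0 => m _; exact: dotv_ge0.
have E : \sum_(m < n) dotv (a m - D) (a m - D) =
   \sum_(m < n) dotv (a m) (a m) - n%:R * dotv D D.
  have -> : \sum_(m < n) dotv (a m - D) (a m - D) =
     \sum_(m < n) dotv (a m) (a m) - 2 * dotv (\sum_(m < n) a m) D
       + \sum_(m < n) dotv D D.
    rewrite dotv_suml mulr_sumr -sumrB -big_split /=.
    apply: eq_bigr => m _.
    rewrite !dotvBl !dotvBr (@dotvC _ _ D (a m)); ring.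
  rewrite S dotvZl sumr_const card_ord -[dotv D D *+ n]mulr_natl; ring.
rewrite E subr_ge0 in H.
by rewrite ler_pdivlMl.
Qed.

Lemma eqle (R : numDomainType) (x y : R) : x = y -> x <= y.
Proof. by move=> ->. Qed.

Theorem proposition2 (R : realType) (d M : nat) (hM : (0 < M)%N)
  (F : 'I_M -> 'rV[R]_d -> R) (gF : 'I_M -> 'rV[R]_d -> 'rV[R]_d)
  (L U : R) (hL : 0 < L) (hU : 0 < U)
  (hgrad : forall m, is_gradient (F m) (gF m))
  (hlip : forall m, lipschitz_grad L (gF m))
  (hconv : forall m, strongly_convex U (F m) (gF m))
  (w : 'I_M -> R) (hw : forall m, 0 < w m) (hw1 : \sum_(m < M) w m = 1)
  (thstar : 'rV[R]_d)
  (hstar : forall th, \sum_(m < M) w m * F m thstar <= \sum_(m < M) w m * F m th)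
  (epsL epsU rho : R) (heL : 0 < epsL < 1) (heU : 0 < epsU < 1)
  (hrho : 0 < rho) (hrho' : rho <= U / L)
  (theta : nat -> 'rV[R]_d) (h : nat -> 'I_M -> 'rV[R]_d)
  (hloc : forall n m,
     local_accurate
       (local_obj (F m) (gF m) (fun th => \sum_(k < M) w k *: gF k th) rho (theta n))
       epsL (h n m))
  (hstep : forall n,
     theta n.+1 = theta n + M%:R^-1 *: \sum_(m < M) h n m) :
  let Lg := fun th => \sum_(m < M) w m * F m th in
  let Ncheck := 2 * L ^+ 2 / (U ^+ 2 * rho * (1 - epsL)) * ln epsU^-1 in
  forall n : nat, Ncheck <= n%:R ->
    Lg (theta n) - Lg thstar <= epsU * (Lg (theta 0%N) - Lg thstar).
Proof.
move=> Lg Ncheck n Hn.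
pose gL := fun th => \sum_(k < M) w k *: gF k th.
have /andP[eL0 eL1] := heL; have /andP[eU0 eU1] := heU.
have SC : forall m x v, F m x + dotv (gF m x) v + U / 2 * dotv v v <= F m (x + v).
  move=> m x v; have := hconv m x (x + v).
  by have -> : x + v - x = v by rewrite addrAC subrr add0r.
have DL : forall m x v, F m (x + v) <= F m x + dotv (gF m x) v + L / 2 * dotv v v.
  by move=> m; apply: descent.
have gLdot : forall x v, dotv (gL x) v = \sum_(m < M) w m * dotv (gF m x) v.
  by move=> x v; rewrite /gL dotv_suml; apply: eq_bigr => m _; rewrite dotvZl.
have LgDL : forall x v, Lg (x + v) <= Lg x + dotv (gL x) v + L / 2 * dotv v v.
  move=> x v; rewrite /Lg gLdot.
  have -> : L / 2 * dotv v v = \sum_(m < M) w m * (L / 2 * dotv v v)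
    by rewrite -mulr_suml hw1 mul1r.
  rewrite -!big_split /=; apply: ler_sum => m _.
  rewrite -!mulrDr; apply: ler_wpM2l; [exact: ltW | exact: DL].
have LgSC : forall x v, Lg x + dotv (gL x) v + U / 2 * dotv v v <= Lg (x + v).
  move=> x v; rewrite /Lg gLdot.
  have -> : U / 2 * dotv v v = \sum_(m < M) w m * (U / 2 * dotv v v)
    by rewrite -mulr_suml hw1 mul1r.
  rewrite -!big_split /=; apply: ler_sum => m _.
  rewrite -!mulrDr; apply: ler_wpM2l; [exact: ltW | exact: SC].
have PL : forall x, (Lg x - Lg thstar) * (2 * U) <= dotv (gL x) (gL x).
  move=> x; have := LgSC x (thstar - x); rewrite [x + _]addrC subrK.
  set v := thstar - x; set gg := gL x => H.
  have := @dotv_ge0 _ _ (gg + U *: v).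
  rewrite !dotvDl !dotvDr !dotvZl !dotvZr (@dotvC _ _ v gg) => H2.
  have H3 : (Lg x - Lg thstar) * (2 * U) <= (- dotv gg v - U / 2 * dotv v v) * (2 * U).
    by apply: ler_wpM2r; lra.
  have E3 : (- dotv gg v - U / 2 * dotv v v) * (2 * U) = - (2 * U * dotv gg v) - U * (U * dotv v v).
    by field.
  rewrite E3 in H3.
  lra.
have rhoL : rho * L <= U by rewrite -ler_pdivlMr.
have step : forall k, Lg (theta k.+1) - Lg thstar <=
    (1 - (1 - epsL) * rho * U / L) * (Lg (theta k) - Lg thstar).
  move=> k.
  set th := theta k; set gg := gL th; set A := dotv gg gg.
  have key : forall m, rho * dotv gg (h k m) <=
      - ((1 - epsL) * (rho ^+ 2 * A / (2 * L))) - U / 2 * dotv (h k m) (h k m).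
    move=> m; have [hs [Hmin Hacc]] := hloc k m.
    have GE : forall v, local_obj (F m) (gF m) gL rho th v =
        F m (th + v) - dotv (gF m th) v + rho * dotv gg v.
      by move=> v; rewrite /local_obj dotvBl dotvZl; ring.
    have H0 := Hmin (- (rho / L) *: gg).
    rewrite !GE in H0 Hacc.
    rewrite addr0 dotv0r dotv0r mulr0 subr0 addr0 in Hacc.
    have Hq := DL m th (- (rho / L) *: gg).
    rewrite dotvZr dotvZl dotvZr -/A in H0 Hq.
    have E1 : L / 2 * (- (rho / L) * (- (rho / L) * A)) + rho * (- (rho / L) * A)
        = - (rho ^+ 2 * A / (2 * L)).
      by field; rewrite gt_eqF.
    set Ghs := F m (th + hs) - dotv (gF m th) hs + rho * dotv gg hs in H0 Hacc.
    have H1 : Ghs <= F m th - rho ^+ 2 * A / (2 * L) by lra.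
    have H2 : (1 - epsL) * Ghs <= (1 - epsL) * (F m th - rho ^+ 2 * A / (2 * L)).
      by apply: ler_wpM2l; lra.
    have H3 := SC m th (h k m).
    lra.
  have Mpos : 0 < M%:R :> R by rewrite ltr0n.
  set Dl := M%:R^-1 *: \sum_(m < M) h k m.
  have Hth : theta k.+1 = th + Dl by rewrite hstep.
  rewrite Hth.
  have H1 := LgDL th Dl.
  have J := @jensen_dot R d M (h k) hM.
  rewrite -/Dl in J.
  set S1 := \sum_(m < M) dotv gg (h k m).
  set S2 := \sum_(m < M) dotv (h k m) (h k m).
  have HS1 : dotv gg Dl = M%:R^-1 * S1 by rewrite /Dl dotvZr dotv_sumr.
  rewrite HS1 in H1.
  have S2ge : 0 <= S2 by apply: sumr_ge0 => m _; exact: dotv_ge0.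
  have HK : rho * S1 <= - (M%:R * ((1 - epsL) * (rho ^+ 2 * A / (2 * L)))) - U / 2 * S2.
    rewrite /S1 /S2 mulr_sumr.
    apply: (le_trans (ler_sum _ (fun m _ => key m))).
    by rewrite sumrB sumrN sumr_const card_ord -mulr_sumr; apply: eqle; ring.
  set K := (1 - epsL) * (rho ^+ 2 * A / (2 * L)) in HK.
  set X := Lg (th + Dl) - Lg th.
  have HX : X <= M%:R^-1 * S1 + L / 2 * (M%:R^-1 * S2).
    have : L / 2 * dotv Dl Dl <= L / 2 * (M%:R^-1 * S2) by apply: ler_wpM2l => //; lra.
    rewrite /X; lra.
  have HrX : rho * X <= rho * (M%:R^-1 * S1 + L / 2 * (M%:R^-1 * S2)).
    by apply: ler_wpM2l => //; exact: ltW.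
  have Minv : 0 < M%:R^-1 :> R by rewrite invr_gt0.
  have HK2 : M%:R^-1 * (rho * S1) <= M%:R^-1 * (- (M%:R * K) - U / 2 * S2).
    by apply: ler_wpM2l => //; exact: ltW.
  have EK : M%:R^-1 * (- (M%:R * K) - U / 2 * S2) = - K - U / 2 * (M%:R^-1 * S2).
    by field; rewrite gt_eqF.
  rewrite EK in HK2.
  have HS2 : 0 <= M%:R^-1 * S2 by rewrite mulr_ge0 // ltW.
  have HU2 : rho * L * (M%:R^-1 * S2) <= U * (M%:R^-1 * S2) by apply: ler_wpM2r.
  have HrX2 : rho * X <= - K.
    have E2 : rho * (M%:R^-1 * S1 + L / 2 * (M%:R^-1 * S2)) =
       M%:R^-1 * (rho * S1) + (rho * L) * (M%:R^-1 * S2) / 2 by ring.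
    rewrite E2 in HrX; lra.
  have HX2 : X <= - ((1 - epsL) * rho / (2 * L) * A).
    rewrite -(ler_pM2l hrho); apply: (le_trans HrX2); rewrite /K.
    by apply: eqle; field; rewrite gt_eqF.
  have HPL := PL th; rewrite -/gg -/A in HPL.
  have c0 : 0 <= (1 - epsL) * rho / (2 * L).
    by apply: divr_ge0; [apply: mulr_ge0; lra | lra].
  have HPL2 := ler_wpM2l c0 HPL.
  have E3 : (1 - epsL) * rho / (2 * L) * ((Lg th - Lg thstar) * (2 * U)) =
     (1 - epsL) * rho * U / L * (Lg th - Lg thstar) by field; rewrite gt_eqF.
  rewrite E3 in HPL2.
  rewrite /X in HX2; lra.
have [d0|dpos] := posnP d.
  subst d.
  rewrite (thinmx0 (theta n)) (thinmx0 thstar) (thinmx0 (theta 0%N)) subrr mulr0.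
  exact: lexx.
have UL : U <= L.
  pose v : 'rV[R]_d := const_mx 1.
  have vv : dotv v v = d%:R.
    rewrite /dotv (eq_bigr (fun _ => 1)); last by move=> i _; rewrite !mxE mulr1.
    by rewrite sumr_const card_ord.
  have vpos : 0 < dotv v v by rewrite vv ltr0n.
  pose m0 : 'I_M := Ordinal hM.
  have H1 := SC m0 0 v; have H2 := DL m0 0 v.
  have : U / 2 * dotv v v <= L / 2 * dotv v v by lra.
  rewrite ler_pM2r // ler_pM2r //; by rewrite invr_gt0.
set kap := (1 - epsL) * rho * U / L in step.
have kap0 : 0 <= kap.
  by rewrite /kap; apply: divr_ge0; [apply: mulr_ge0; [apply: mulr_ge0|]|]; lra.
pose e := fun k => Lg (theta k) - Lg thstar.
have e0 : forall k, 0 <= e k by move=> k; rewrite /e subr_ge0; exact: hstar.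
pose q := Num.max (1 - kap) 0.
have q0 : 0 <= q by rewrite /q le_max lexx orbT.
have iter : forall k, e k <= q ^+ k * e 0%N.
  elim => [|k IH]; first by rewrite expr0 mul1r.
  apply: (le_trans (step k)).
  have H1 : (1 - kap) * e k <= q * e k.
    by apply: ler_wpM2r => //; rewrite /q le_max lexx.
  apply: (le_trans H1); rewrite exprS -mulrA.
  exact: ler_wpM2l.
have qexp : q <= expR (- kap).
  rewrite /q ge_max expR_ge0 andbT.
  by have := expR_ge1Dx (- kap); rewrite addrC.
have epsUpos : epsU \is Num.pos by rewrite posrE.
set l := ln epsU^-1.
have l0 : 0 <= l by apply: ln_ge0; rewrite invf_ge1 // ltW.
have lE : ln epsU = - l by rewrite /l lnV ?opprK.
have Hk : kap * Ncheck = 2 * L / U * l.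
  rewrite /kap /Ncheck -/l; field.
  by rewrite !gt_eqF // ?subr_gt0 //; lra.
have H2L : l <= 2 * L / U * l.
  rewrite -{1}[l]mul1r; apply: ler_wpM2r => //.
  by rewrite ler_pdivlMr // mul1r; lra.
have Hnk : l <= n%:R * kap.
  apply: (le_trans H2L); rewrite -Hk [kap * _]mulrC; exact: ler_wpM2r.
have Hq : q ^+ n <= epsU.
  apply: (le_trans (y := expR (- kap) ^+ n)).
    by apply: lerXn2r; rewrite ?nnegrE ?expR_ge0.
  rewrite -expRM_natl -{1}(lnK epsUpos) ler_expR lE; lra.
apply: (le_trans (iter n)).
exact: ler_wpM2r.
Qed.
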